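(* Let $m,n,a,d\in\mathbb{N}$. Let $X_1,\dots,X_m$ be i.i.d. random variables uniformly distributed on $\{1,2,\dots,a\}$ and $Y_1,\dots,Y_n$ i.i.d. random variables uniformly distributed on $\{1,2,\dots,d\}$, independent of the $X_i$. Let $X^{(1)}$ denote the largest of $X_1,\dots,X_m$ and $Y^{(1)}$ the largest of $Y_1,\dots,Y_n$. Then \[ \Pr\left(X^{(1)}>Y^{(1)}\right)=\sum_{y=1}^{\min\{a,d\}}\frac{(a^m-y^m)(y^n-(y-1)^n)}{a^{m}d^{n}}. \]
   Context: The $X_i$ are the faces shown by $m$ attacker dice with $a$ sides and the $Y_j$ the faces of $n$ defender dice with $d$ sides. In the paper's notation, the event $X^{(1)}>Y^{(1)}$ is written $\{X_i\}_m>_{1,1}\{Y_j\}_n$ (exactly one of the one comparison $X^{(1)}>Y^{(1)}$ holds; ties go to the defender). *)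

(* Defs.v *)
From HB Require Import structures.
From mathcomp Require Import all_boot all_order all_algebra.
Set Implicit Arguments. Unset Strict Implicit. Unset Printing Implicit Defensive.
Import Order.TTheory GRing.Theory Num.Theory.

(* Outcome of rolling m dice with a sides: a function 'I_m -> 'I_a; the
   face shown by die i is (x i).+1 \in {1,...,a}. *)
Definition attacker_roll (m a : nat) := {ffun 'I_m -> 'I_a}.
Definition defender_roll (n d : nat) := {ffun 'I_n -> 'I_d}.

Definition dice_space (m n a d : nat) :=
  (attacker_roll m a * defender_roll n d)%type.

Definition top_face (k s : nat) (x : {ffun 'I_k -> 'I_s}) : nat :=
  \max_(i < k) (x i).+1.

(* Uniform probability measure on a finite sample space: under it the
   coordinates are independent and each uniformly distributed. *)
Definition uprob (R : numFieldType) (T : finType) (E : {pred T}) : R :=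
  (#|E|%:R / #|T|%:R)%R.

(* Main.v *)
Require Import Defs.
From mathcomp Require Import all_boot all_order all_algebra zify.
Import Order.TTheory GRing.Theory Num.Theory.

Lemma card_lt (s y : nat) : #|[pred j : 'I_s | j < y]| = minn y s.
Proof.
rewrite cardE /enum_mem size_filter -(count_map val (fun j => j < y)).
rewrite -enumT val_enum_ord.
elim: s => [|s IH]; first by rewrite minn0.
rewrite -addn1 iotaD count_cat IH /= add0n addn0 addn1.
case: (ltnP s y) => h.
- lia.
  idtac.
- lia.
Qed.

Lemma cnt_le k s y : #|[pred x : {ffun 'I_k -> 'I_s} | top_face x <= y]| = (minn y s)^k.
Proof.
transitivity #|(ffun_on [pred j : 'I_s | j < y] : {pred {ffun 'I_k -> 'I_s}})|.
  apply: eq_card => x; rewrite inE /= /top_face.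
  apply/bigmax_leqP/ffun_onP => H i; [by rewrite inE; apply: H | by move=> _; have := H i; rewrite inE].
by rewrite card_ffun_on card_lt card_ord.
Qed.

Lemma top_le k s (x : {ffun 'I_k -> 'I_s}) : top_face x <= s.
Proof. by apply/bigmax_leqP => i _; exact: ltn_ord. Qed.

Lemma top_ge1 k s (x : {ffun 'I_k.+1 -> 'I_s}) : 0 < top_face x.
Proof. by rewrite /top_face (bigD1 ord0) //= leq_max. Qed.

Lemma cnt_eq k s y : 0 < y ->
  #|[pred x : {ffun 'I_k -> 'I_s} | top_face x == y]| = (minn y s)^k - (minn y.-1 s)^k.
Proof.
move=> y0; rewrite -!cnt_le.
set A := [pred x : {ffun 'I_k -> 'I_s} | top_face x <= y].
set B := [pred x : {ffun 'I_k -> 'I_s} | top_face x <= y.-1].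
rewrite -(cardID B A).
have -> : #|[predI A & B]| = #|B|.
  apply: eq_card => x; rewrite !inE /=.
  by case: y y0 {A B} => // y _ /=; apply/andP/idP => [[]//|h]; split=> //; apply: leq_trans h _.
rewrite addKn; apply: eq_card => x; rewrite !inE /=.
by case: y y0 {A B} => // y _ /=; rewrite -ltnNge eqn_leq andbC.
Qed.

Lemma sum_bool_card (T : finType) (P : pred T) : \sum_(x : T) (P x : nat) = #|P|.
Proof. by rewrite -sum1_card [RHS]big_mkcond; apply: eq_bigr => x _; rewrite unfold_in; case: (P x). Qed.

Lemma count_nat m n a d : (0 < m)%N -> (0 < n)%N -> (0 < a)%N -> (0 < d)%N ->
  #|[pred w : dice_space m n a d | top_face w.2 < top_face w.1]| =
  \sum_(1 <= y < (minn a d).+1) (a^m - y^m) * (y^n - y.-1^n).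
Proof.
move=> hm hn ha hd.
set G := fun t => a ^ m - (minn t a) ^ m.
transitivity (\sum_(w1 : attacker_roll m a) \sum_(w2 : defender_roll n d) (top_face w2 < top_face w1 : nat)).
  by rewrite pair_big /= -sum_bool_card.
have H2 : forall w2 : defender_roll n d,
    \sum_(w1 : attacker_roll m a) (top_face w2 < top_face w1 : nat) = G (top_face w2).
  move=> w2; rewrite sum_bool_card /G -(cnt_le m a (top_face w2)).
  have hT := cardC [pred x : {ffun 'I_m -> 'I_a} | top_face x <= top_face w2].
  rewrite card_ffun !card_ord in hT; rewrite -hT addKn; apply: eq_card => x; by rewrite unfold_in /= ltnNge.
rewrite exchange_big /=.
rewrite (eq_bigr (fun w2 => G (top_face w2))); last by move=> w2 _; exact: H2.
have H3 : forall w2 : defender_roll n d, G (top_face w2) =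
    \sum_(y < d.+1) (top_face w2 == y : nat) * G y.
  move=> w2; have ht : top_face w2 < d.+1 by rewrite ltnS top_le.
  rewrite (bigD1 (Ordinal ht)) //= eqxx mul1n big1 ?addn0 // => i hi.
  suff -> : (top_face w2 == i) = false by [].
  apply/negbTE; apply: contra hi => /eqP e; apply/eqP; apply: val_inj => /=; by rewrite e.
rewrite (eq_bigr _ (fun w2 _ => H3 w2)) exchange_big /=.
rewrite (eq_bigr (fun y : 'I_d.+1 => #|[pred x : defender_roll n d | top_face x == y]| * G y)); last first.
  move=> y _; rewrite -big_distrl /=; congr (_ * _).
  by rewrite -sum_bool_card.
rewrite -(big_mkord xpredT (fun y => #|[pred x : defender_roll n d | top_face x == y]| * G y)).
rewrite big_ltn //.
have -> : #|[pred x : defender_roll n d | top_face x == 0]| = 0.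
  apply/eqP; rewrite -leqn0.
  apply: (@leq_trans #|[pred x : defender_roll n d | top_face x <= 0]|).
    apply: subset_leq_card; apply/subsetP => x; rewrite unfold_in /= unfold_in /=; by move/eqP->.
  by rewrite cnt_le min0n exp0n.
rewrite mul0n add0n.
have hmin : minn a d <= d by rewrite geq_minr.
rewrite (@big_cat_nat nat 0 addn (minn a d).+1) ?ltnS //.
rewrite /= [X in _ + X = _]big1_seq ?addn0; last first.
  move=> y; rewrite mem_index_iota => /andP [hy1 hy2].
  have hya : a <= y by lia.
  by rewrite /G (minn_idPr hya) subnn muln0.
apply: eq_big_nat => y /andP [hy1 hy2].
have hy : y <= minn a d by rewrite -ltnS.
have hya : y <= a by apply: leq_trans hy (geq_minl _ _).
have hyd : y <= d by apply: leq_trans hy hmin.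
rewrite cnt_eq // (minn_idPl hyd) (minn_idPl (leq_trans (leq_pred y) hyd)) /G (minn_idPl hya).
by rewrite mulnC.
Qed.

Theorem proposition6p1 (R : realFieldType) (m n a d : nat)
  (hm : (0 < m)%N) (hn : (0 < n)%N) (ha : (0 < a)%N) (hd : (0 < d)%N) :
  uprob R [pred w : dice_space m n a d | top_face w.2 < top_face w.1] =
  (\sum_(1 <= y < (minn a d).+1)
     ((a%:R ^+ m - y%:R ^+ m) * (y%:R ^+ n - (y.-1)%:R ^+ n))
       / (a%:R ^+ m * d%:R ^+ n))%R.
Proof.
rewrite /uprob count_nat // card_prod !card_ffun !card_ord -mulr_suml natrM !natrX.
congr (_ / _)%R; rewrite natr_sum; apply: eq_big_nat => y /andP [h1 h2].
have hya : (y <= a)%N by rewrite ltnS in h2; exact: leq_trans h2 (geq_minl _ _).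
rewrite natrM !natrB ?natrX //.
- by rewrite leq_exp2r // leq_pred.
- by rewrite leq_exp2r.
Qed.
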